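(* Let $X$ be a continuum, let $n\geq 2$ be an integer, and let $f:X\to X$ be a map. Consider the statements: (1) $f$ is multi-sensitive; (2) $F_n(f)$ is multi-sensitive; (3) $SF_n(f)$ is multi-sensitive. Then (1) and (2) are equivalent, and (3) implies (2).
   Context: A continuum is a nonempty compact connected metric space $(X,d)$. For $n\in\mathbb{N}$, $F_n(X)$ is the set of nonempty subsets of $X$ with at most $n$ points, with the Hausdorff metric $d_H$; $F_1(X)=\{\{x\}:x\in X\}$. For $f:X\to X$, $F_n(f)(A)=f(A)$. For $n\geq 2$, $SF_n(X)=F_n(X)/F_1(X)$ (collapsing $F_1(X)$ to a point), $q$ the quotient map, $F_X=q(F_1(X))$, and $SF_n(f)(\chi)=q(F_n(f)(q^{-1}(\chi)))$ if $\chi\neq F_X$, $SF_n(f)(F_X)=F_X$. $SF_n(X)$ carries the metric $\rho(\chi_1,\chi_2)=\mathcal{H}^2(F_1(X)\cup q^{-1}(\chi_1),F_1(X)\cup q^{-1}(\chi_2))$, with $\mathcal{H}^2$ the Hausdorff metric on closed subsets of $F_n(X)$ induced by $d_H$. A map $g$ on a metric space $(Z,D)$ is multi-sensitive if there is $\delta>0$ such that for every $m\in\mathbb{N}$ and all nonempty open $U_1,\dots,U_m\subseteq Z$ there is $k\in\mathbb{N}$ such that for every $i$ there exist $x_i,y_i\in U_i$ with $D(g^k(x_i),g^k(y_i))>\delta$ (with $D=d,d_H,\rho$ for $f,F_n(f),SF_n(f)$). *)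

(* Defs.v *)
From HB Require Import structures.
From mathcomp Require Import all_boot all_order all_algebra.
From mathcomp Require Import all_classical all_reals all_analysis.
Set Implicit Arguments. Unset Strict Implicit.
 Unset Printing Implicit Defensive.
Import Order.TTheory GRing.Theory Num.Theory.
Local Open Scope classical_set_scope.
Local Open Scope ring_scope.

Definition dist_to (R : realType) (Z : Type) (D : Z -> Z -> R) (z : Z) (B : set Z) : R :=
  inf [set D z b | b in B].

Definition hausdorff (R : realType) (Z : Type) (D : Z -> Z -> R) (A B : set Z) : R :=
  Num.max (sup [set dist_to D a B | a in A]) (sup [set dist_to D b A | b in B]).

Definition Fn_pred (X : Type) (n : nat) (A : set X) : Prop :=
  A !=set0 /\ exists p : 'I_n -> X, A `<=` range p.

Definition Fn (X : Type) (n : nat) := {A : set X | Fn_pred n A}.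

Definition F1_pred (X : Type) (A : set X) : Prop := exists x : X, A = [set x].

Definition dH (R : realType) (X : metricType R) (n : nat) (A B : Fn X n) : R :=
  hausdorff (@mdist R X) (proj1_sig A) (proj1_sig B).

Lemma Fn_pred_image (X : Type) (n : nat) (f : X -> X) (A : set X) :
  Fn_pred n A -> Fn_pred n (f @` A).
Proof.
move=> [[x Ax] [p Ap]]; split; first by exists (f x); exists x.
exists (f \o p) => _ [a Aa <-]; have [i _ <-] := Ap a Aa; by exists i.
Qed.

Definition Fn_map (X : Type) (f : X -> X) (n : nat) (A : Fn X n) : Fn X n :=
  exist _ (f @` proj1_sig A) (Fn_pred_image f (proj2_sig A)).

(* SF_n(X) = F_n(X)/F_1(X): a point of SF_n(X) is represented by its fibre
   q^{-1}(chi), which is either F_1(X) (the point F_X) or a singleton {A}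
   with A not in F_1(X). *)
Definition F1set (X : Type) (n : nat) : set (Fn X n) :=
  [set A | F1_pred (proj1_sig A)].
Arguments F1set : clear implicits.

Definition SF_pred (X : Type) (n : nat) (chi : set (Fn X n)) : Prop :=
  chi = F1set X n \/ exists A : Fn X n, ~ F1_pred (proj1_sig A) /\ chi = [set A].

Definition SFn (X : Type) (n : nat) := {chi : set (Fn X n) | SF_pred chi}.

Lemma SF_pred_F1 (X : Type) (n : nat) : SF_pred (F1set X n).
Proof. by left. Qed.

Definition FX (X : Type) (n : nat) : SFn X n := exist _ (F1set X n) (@SF_pred_F1 X n).

Definition q_set (X : Type) (n : nat) (A : Fn X n) : set (Fn X n) :=
  if `[< F1_pred (proj1_sig A) >] then F1set X n else [set A].

Lemma SF_pred_q (X : Type) (n : nat) (A : Fn X n) : SF_pred (q_set A).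
Proof.
rewrite /q_set; case: asboolP => h; first by left.
by right; exists A.
Qed.

Definition q (X : Type) (n : nat) (A : Fn X n) : SFn X n := exist _ (q_set A) (SF_pred_q A).

Definition SF_map_set (X : Type) (f : X -> X) (n : nat) (chi : set (Fn X n)) : set (Fn X n) :=
  if `[< chi = F1set X n >] then F1set X n
  else \bigcup_(A in chi) q_set (Fn_map f A).

Lemma SF_pred_map (X : Type) (f : X -> X) (n : nat) (chi : set (Fn X n)) :
  SF_pred chi -> SF_pred (SF_map_set f chi).
Proof.
rewrite /SF_map_set; case: asboolP => h; first by left.
case=> [//|[A [_ ->]]]; rewrite bigcup_set1; exact: SF_pred_q.
Qed.

Definition SF_map (X : Type) (f : X -> X) (n : nat) (chi : SFn X n) : SFn X n :=
  exist _ (SF_map_set f (proj1_sig chi)) (SF_pred_map f (proj2_sig chi)).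

Definition rho (R : realType) (X : metricType R) (n : nat) (c1 c2 : SFn X n) : R :=
  hausdorff (@dH R X n) (F1set X n `|` proj1_sig c1) (F1set X n `|` proj1_sig c2).

Definition D_open (R : realType) (Z : Type) (D : Z -> Z -> R) (U : set Z) : Prop :=
  forall z, U z -> exists e : R, 0 < e /\ forall w, D z w < e -> U w.

Definition multi_sensitive (R : realType) (Z : Type) (D : Z -> Z -> R) (g : Z -> Z) : Prop :=
  exists delta : R, 0 < delta /\
    forall (m : nat) (U : 'I_m -> set Z),
      (forall i, D_open D (U i) /\ U i !=set0) ->
      exists k : nat, (0 < k)%N /\
        forall i, exists x y, U i x /\ U i y /\ delta < D (iter k g x) (iter k g y).

Arguments Fn_map {X} f n A.
Arguments SF_map {X} f n chi.

(* Main.v *)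
Require Import Defs.
From HB Require Import structures.
From mathcomp Require Import all_boot all_order all_algebra.
From mathcomp Require Import all_classical all_reals all_analysis.
From mathcomp Require Import lra.
Import Order.TTheory GRing.Theory Num.Theory.
Local Open Scope classical_set_scope.
Local Open Scope ring_scope.
Set Implicit Arguments. Unset Strict Implicit.

Section generic.
Variables (R : realType) (Z : Type) (D : Z -> Z -> R).
Hypothesis D0 : forall a b, 0 <= D a b.

Lemma dist_le z (B : set Z) b : B b -> dist_to D z B <= D z b.
Proof.
move=> Bb; apply: ge_inf; last by exists b.
by exists 0 => _ [c _ <-].
Qed.

Lemma dist_ge z (B : set Z) c : B !=set0 -> (forall b, B b -> c <= D z b) ->
  c <= dist_to D z B.
Proof.
move=> [b Bb] h; apply: lb_le_inf; first by exists (D z b); exists b.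
by move=> _ [w Bw <-]; exact: h.
Qed.

Lemma dist_ge0 z (B : set Z) : B !=set0 -> 0 <= dist_to D z B.
Proof. by move=> B0; apply: dist_ge. Qed.

Lemma dist_lt z (B : set Z) c : B !=set0 -> dist_to D z B < c ->
  exists2 b, B b & D z b < c.
Proof.
move=> [b Bb] /inf_lt[]; first by exists (D z b); exists b.
by move=> _ [w Bw <-] h; exists w.
Qed.

Lemma haus_ge1 (A B : set Z) a : has_ubound [set dist_to D a B | a in A] -> A a ->
  dist_to D a B <= hausdorff D A B.
Proof.
move=> ub Aa; rewrite /hausdorff le_max; apply/orP; left.
by apply: ub_le_sup => //; exists a.
Qed.

Lemma hausC (A B : set Z) : hausdorff D A B = hausdorff D B A.
Proof. by rewrite /hausdorff maxC. Qed.

Lemma haus_le (A B : set Z) c : A !=set0 -> B !=set0 ->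
  (forall a, A a -> dist_to D a B <= c) -> (forall b, B b -> dist_to D b A <= c) ->
  hausdorff D A B <= c.
Proof.
move=> [a Aa] [b Bb] h1 h2; rewrite /hausdorff ge_max; apply/andP; split.
  by apply: ge_sup; [exists (dist_to D a B); exists a|move=> _ [w Aw <-]; exact: h1].
by apply: ge_sup; [exists (dist_to D b A); exists b|move=> _ [w Aw <-]; exact: h2].
Qed.

Lemma haus_gt (A B : set Z) c : A !=set0 -> B !=set0 -> c < hausdorff D A B ->
  (exists2 a, A a & c < dist_to D a B) \/ (exists2 b, B b & c < dist_to D b A).
Proof.
move=> [a Aa] [b Bb]; rewrite /hausdorff lt_max => /orP[] /sup_gt.
  case; first by exists (dist_to D a B); exists a.
  by move=> _ [w Aw <-] h; left; exists w.
case; first by exists (dist_to D b A); exists b.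
by move=> _ [w Aw <-] h; right; exists w.
Qed.

End generic.

Lemma fin_ub (R : realType) (T : Type) (I : finType) (p : I -> T) (g : T -> R) (A : set T) :
  A `<=` range p -> has_ubound [set g a | a in A].
Proof.
move=> Ap; exists (\sum_i `|g (p i)|) => _ [a Aa <-].
have [i _ <-] := Ap a Aa.
rewrite (bigD1 i) //= (le_trans (ler_norm _)) // lerDl.
by apply: sumr_ge0 => j _; exact: normr_ge0.
Qed.

Lemma fin_min (R : realType) (I : finType) (e : I -> R) : (forall i, 0 < e i) ->
  exists e0 : R, 0 < e0 /\ forall i, e0 <= e i.
Proof.
move=> he; exists (\big[Num.min/1]_i e i); split.
  by apply: (big_ind (fun x => 0 < x)) => // x y x0 y0; rewrite lt_min x0 y0.
move=> i; rewrite (bigD1 i) //= ge_min lexx //.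
Qed.


Section X.
Variables (R : realType) (X : metricType R) (n : nat).
Local Notation d := (@mdist R X).
Local Notation FX := (Fn X n).

Lemma dsym (x y : X) : d x y = d y x. Proof. exact: metric_sym. Qed.
Lemma d0 (x y : X) : 0 <= d x y. Proof. exact: mdist_ge0. Qed.

Lemma Fn_ne (A : FX) : proj1_sig A !=set0.
Proof. by case: A => ? [] . Qed.

Lemma Fn_cov (A : FX) : exists p : 'I_n -> X, proj1_sig A `<=` range p.
Proof. by case: A => ? [] . Qed.

Lemma Fn_range (A : FX) : exists p : 'I_n -> X, proj1_sig A = range p.
Proof.
have [a0 Aa0] := Fn_ne A; have [p Ap] := Fn_cov A.
exists (fun j => if `[< proj1_sig A (p j) >] then p j else a0).
apply/seteqP; split => [a Aa|_ [j _ <-]].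
  have [j _ pj] := Ap a Aa; exists j => //; rewrite -pj; case: asboolP => //.
  by rewrite pj.
by case: asboolP.
Qed.

Lemma dH_ub (A : FX) (S : set X) :
  has_ubound [set dist_to d a S | a in proj1_sig A].
Proof. have [p Ap] := Fn_cov A; exact: fin_ub Ap. Qed.

Lemma dH_ge1 (A B : FX) a : proj1_sig A a -> dist_to d a (proj1_sig B) <= dH A B.
Proof. move=> Aa; apply: haus_ge1 => //; exact: dH_ub. Qed.

Lemma dH_ge2 (A B : FX) b : proj1_sig B b -> dist_to d b (proj1_sig A) <= dH A B.
Proof. move=> Bb; rewrite /dH hausC; apply: haus_ge1 => //; exact: dH_ub. Qed.

Lemma dHC (A B : FX) : dH A B = dH B A.
Proof. by rewrite /dH hausC. Qed.

Lemma dH_ge0 (A B : FX) : 0 <= dH A B.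
Proof.
have [a Aa] := Fn_ne A; apply: le_trans (dH_ge1 B Aa).
by apply: dist_ge0 => //; [exact: d0|exact: Fn_ne].
Qed.

Lemma dH_le (A B : FX) c :
  (forall a, proj1_sig A a -> exists2 b, proj1_sig B b & d a b <= c) ->
  (forall b, proj1_sig B b -> exists2 a, proj1_sig A a & d b a <= c) ->
  dH A B <= c.
Proof.
move=> h1 h2; apply: haus_le; try exact: Fn_ne.
  by move=> a /h1[b Bb le]; apply: le_trans le; apply: dist_le => //; exact: d0.
by move=> b /h2[a Aa le]; apply: le_trans le; apply: dist_le => //; exact: d0.
Qed.

Lemma dH_self (A : FX) : dH A A <= 0.
Proof. by apply: dH_le => a Aa; exists a => //; rewrite mdistxx. Qed.

Lemma dH_gt (A B : FX) c : c < dH A B ->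
  exists a b, proj1_sig A a /\ proj1_sig B b /\ c < d a b.
Proof.
move/haus_gt => /(_ (Fn_ne A) (Fn_ne B))[[a Aa lt]|[b Bb lt]].
  have [b Bb] := Fn_ne B; exists a, b; split => //; split => //.
  apply: lt_le_trans lt _; apply: dist_le => //; exact: d0.
have [a Aa] := Fn_ne A; exists a, b; split => //; split => //.
rewrite dsym; apply: lt_le_trans lt _; apply: dist_le => //; exact: d0.
Qed.

Lemma dH_lt (A B : FX) c b : proj1_sig B b -> dH A B < c ->
  exists2 a, proj1_sig A a & d b a < c.
Proof.
move=> Bb lt; apply: dist_lt; first exact: Fn_ne.
exact: le_lt_trans (dH_ge2 A Bb) lt.
Qed.

Lemma dH_sing (A B : FX) a b x : proj1_sig A a -> proj1_sig A b ->
  proj1_sig B = [set x] -> d a b / 2 <= dH A B.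
Proof.
move=> Aa Ab Bx.
have h z : proj1_sig A z -> d z x <= dH A B.
  move=> Az; apply: le_trans (dH_ge1 B Az); apply: dist_ge; first by rewrite Bx; exists x.
  by rewrite Bx => w ->.
rewrite ler_pdivrMr // mulr2n mulrDr mulr1.
apply: le_trans (metric_triangle a x b) _; apply: lerD; first exact: h.
by rewrite dsym; exact: h.
Qed.
End X.


Section X3.
Variables (R : realType) (X : metricType R) (n : nat).
Local Notation d := (@mdist R X).
Local Notation FX := (Fn X n).

Lemma iter_Fn (f : X -> X) k (A : FX) :
  proj1_sig (iter k (Fn_map f n) A) = iter k f @` proj1_sig A.
Proof.
elim: k => [|k IH] /=; first by rewrite image_id.
rewrite IH; apply/seteqP; split => [_ [_ [x Ax <-] <-]|_ [x Ax <-]].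
  by exists x.
by exists (iter k f x) => //; exists x.
Qed.

Lemma mball_open (c : X) e : D_open d [set y | d c y < e].
Proof.
move=> z /= cz; exists (e - d c z); split; first by rewrite subr_gt0.
move=> w zw; apply: le_lt_trans (metric_triangle c z w) _.
by rewrite -ltrBrDl.
Qed.

Lemma sub_open (U : set X) : D_open d U ->
  D_open (@dH R X n) [set A : FX | proj1_sig A `<=` U].
Proof.
move=> oU A /= AU; have [p Ap] := Fn_cov A.
have : forall j : 'I_n, exists e : R, 0 < e /\
    (proj1_sig A (p j) -> forall w, d (p j) w < e -> U w).
  move=> j; case: (pselect (proj1_sig A (p j))) => h; last by exists 1.
  by have [e [e0 he]] := oU _ (AU _ h); exists e.
case/fin_all_exists => e he.
have [e0 [e00 e0le]] := fin_min (fun j => (he j).1).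
exists e0; split => // B AB b Bb.
have [a Aa ba] := dH_lt Bb AB; have [j _ pja] := Ap a Aa.
apply: (he j).2; first by rewrite pja.
by rewrite pja dsym (lt_le_trans ba) // -pja.
Qed.

Definition sing (x : X) (n0 : (0 < n)%N) : FX.
Proof.
exists [set x]; split; first by exists x.
by exists (fun _ => x) => _ ->; exists (Ordinal n0).
Defined.

Lemma ms21 (f : X -> X) : (0 < n)%N ->
  multi_sensitive (@dH R X n) (Fn_map f n) -> multi_sensitive d f.
Proof.
move=> n0 [delta [dpos H]]; exists delta; split => // m U hU.
have [] := H m (fun i => [set A : FX | proj1_sig A `<=` U i]).
  move=> i; split; first exact/sub_open/(hU i).1.
  have [x Ux] := (hU i).2; by exists (sing x n0) => /= _ ->.
move=> k [k0 hk]; exists k; split => // i.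
have [A [B [AU [BU]]]] := hk i.
case/dH_gt => a [b []]; rewrite !iter_Fn => -[a' Aa' <-] [[b' Bb' <-] lt].
by exists a', b'; split; [exact: AU|split; [exact: BU|]].
Qed.
End X3.


Section X4.
Variables (R : realType) (X : metricType R) (n : nat).
Local Notation d := (@mdist R X).
Local Notation FX := (Fn X n).

Definition rng (w : 'I_n -> X) (n0 : (0 < n)%N) : FX.
Proof.
exists (range w); split; first by exists (w (Ordinal n0)); exists (Ordinal n0).
by exists w.
Defined.

Lemma ms12 (f : X -> X) : (0 < n)%N ->
  multi_sensitive d f -> multi_sensitive (@dH R X n) (Fn_map f n).
Proof.
move=> n0 [delta [dpos H]]; exists (delta / 4); split; first by lra.
move=> m U hU.
have : forall i : 'I_m, exists t : FX * R * ('I_n -> X),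
    [/\ U i t.1.1, 0 < t.1.2, (forall B, dH t.1.1 B < t.1.2 -> U i B) &
       proj1_sig t.1.1 = range t.2].
  move=> i; have [A UA] := (hU i).2; have [e [e0 he]] := (hU i).1 A UA.
  by have [p Ap] := Fn_range A; exists (A, e, p).
case/fin_all_exists => t ht.
pose A i := (t i).1.1; pose e i := (t i).1.2; pose p i := (t i).2.
pose M := #|{: 'I_m * 'I_n}|.
pose V (k : 'I_M) : set X :=
  [set y | d (p (enum_val k).1 (enum_val k).2) y < e (enum_val k).1 / 2].
have [] := H M V.
  move=> k; split; first by rewrite /V; apply: mball_open.
  exists (p (enum_val k).1 (enum_val k).2); rewrite /V /= mdistxx.
  by have [_ ? _ _] := ht (enum_val k).1; rewrite divr_gt0.
move=> kk [kk0 hk].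
have : forall k, exists z : X * X,
    V k z.1 /\ V k z.2 /\ delta < d (iter kk f z.1) (iter kk f z.2).
  by move=> k; have [x [y h]] := hk k; exists (x, y).
case/fin_all_exists => z hz.
pose xx i j := (z (enum_rank (i, j))).1; pose yy i j := (z (enum_rank (i, j))).2.
have hxy i j : [/\ d (p i j) (xx i j) < e i / 2, d (p i j) (yy i j) < e i / 2 &
    delta < d (iter kk f (xx i j)) (iter kk f (yy i j))].
  by have := hz (enum_rank (i, j)); rewrite /V /= enum_rankK /= => -[? [? ?]].
exists kk; split => // i.
have [UA e0 Uo Ar] := ht i.
have close (w : 'I_n -> X) : (forall j, d (p i j) (w j) < e i / 2) -> U i (rng w n0).
  move=> hw; apply: Uo; apply: (@le_lt_trans _ _ (e i / 2)); last by rewrite /e; lra.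
  apply: dH_le => /=.
    by rewrite Ar => _ [j _ <-]; exists (w j); [exists j|exact: ltW (hw j)].
  by move=> _ [j _ <-]; exists (p i j); [rewrite Ar; exists j|rewrite dsym; exact: ltW (hw j)].
pose j0 : 'I_n := Ordinal n0.
pose P := iter kk f (xx i j0).
pose zz j := if `[< delta / 2 < d (iter kk f (xx i j)) P >] then xx i j else yy i j.
pose a j := if j == j0 then xx i j0 else zz j.
pose b j := if j == j0 then yy i j0 else zz j.
have hzz j : d (p i j) (zz j) < e i / 2.
  by have [? ? _] := hxy i j; rewrite /zz; case: asboolP.
exists (rng a n0), (rng b n0); split.
  apply: close => j; rewrite /a; case: eqP => [->|_] //.
  by have [] := hxy i j0.
split.
  apply: close => j; rewrite /b; case: eqP => [->|_] //.
  by have [] := hxy i j0.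
apply: (@lt_le_trans _ _ (delta / 2)); first by lra.
have PA : proj1_sig (iter kk (Fn_map f n) (rng a n0)) P.
  by rewrite iter_Fn; exists (a j0); [exists j0|rewrite /a eqxx].
apply: le_trans (dH_ge1 _ PA); apply: dist_ge; [exact: Fn_ne|].
rewrite iter_Fn => _ [_ [j _ <-] <-].
have [_ _ lt0] := hxy i j0.
rewrite /b; case: eqP => [_|_]; first by rewrite /P; lra.
have [_ _ lt1] := hxy i j.
have tri := metric_triangle (iter kk f (xx i j)) P (iter kk f (yy i j)).
rewrite /zz; case: asboolP => [h|/negP]; first by rewrite dsym; lra.
by rewrite -leNgt => h; lra.
Qed.
End X4.


Lemma inter_open (R : realType) (Z : Type) (D : Z -> Z -> R) (U V : set Z) :
  D_open D U -> D_open D V -> D_open D (U `&` V).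
Proof.
move=> oU oV z [Uz Vz]; have [e1 [e10 h1]] := oU z Uz; have [e2 [e20 h2]] := oV z Vz.
exists (Num.min e1 e2); split; first by rewrite lt_min e10 e20.
move=> w; rewrite lt_min => /andP[w1 w2]; split; [exact: h1|exact: h2].
Qed.

Section X5.
Variables (R : realType) (X : metricType R) (n : nat).
Local Notation d := (@mdist R X).

Lemma qsetE1 (A : Fn X n) : F1_pred (sval A) -> q_set A = F1set X n.
Proof. by rewrite /q_set; case: asboolP. Qed.

Lemma qsetE2 (A : Fn X n) : ~ F1_pred (sval A) -> q_set A = [set A].
Proof. by rewrite /q_set; case: asboolP. Qed.

Lemma q_surj (x0 : X) (n0 : (0 < n)%N) (chi : SFn X n) : exists A, chi = q A.
Proof.
case: chi => c [E|[A [nA E]]].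
  exists (sing x0 n0); apply: eq_exist; rewrite qsetE1 //; by exists x0.
by exists A; apply: eq_exist; rewrite qsetE2.
Qed.

Lemma F1_image (f : X -> X) (A : Fn X n) :
  F1_pred (sval A) -> F1_pred (sval (Fn_map f n A)).
Proof. by case=> x /= ->; exists (f x); rewrite image_set1. Qed.

Lemma SF_q (f : X -> X) (A : Fn X n) : SF_map f n (q A) = q (Fn_map f n A).
Proof.
rewrite /SF_map /q; apply: eq_exist => /=; rewrite /SF_map_set.
case: (pselect (F1_pred (sval A))) => h.
  rewrite qsetE1 // asboolT // qsetE1 //; exact: F1_image.
rewrite qsetE2 //; case: asboolP => [E|_]; last by rewrite bigcup_set1.
by exfalso; have : F1set X n A by rewrite -E.
Qed.

Lemma SF_iter (f : X -> X) k (A : Fn X n) :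
  iter k (SF_map f n) (q A) = q (iter k (Fn_map f n) A).
Proof. by elim: k => [|k IH] //=; rewrite IH SF_q. Qed.

Lemma dist_self_le (S : set (Fn X n)) B : S B -> dist_to (@dH R X n) B S <= 0.
Proof.
move=> SB; apply: le_trans (dist_le _ _ SB) (dH_self B); exact: dH_ge0.
Qed.

Lemma in_qS (B : Fn X n) : (F1set X n `|` q_set B) B.
Proof.
case: (pselect (F1_pred (sval B))) => h; first by left.
by right; rewrite qsetE2.
Qed.

Lemma qS_cases (A Z : Fn X n) : (F1set X n `|` q_set A) Z -> F1set X n Z \/ Z = A.
Proof.
case=> [|ZA]; first by left.
case: (pselect (F1_pred (sval A))) => h.
  by left; rewrite qsetE1 in ZA.
by right; rewrite qsetE2 in ZA.
Qed.

Lemma rho_le_dH (x0 : X) (n0 : (0 < n)%N) (A B : Fn X n) :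
  rho (q A) (q B) <= dH A B.
Proof.
have ne : F1set X n !=set0 by exists (sing x0 n0); exists x0.
rewrite /rho /=; apply: haus_le.
- by case: ne => z z1; exists z; left.
- by case: ne => z z1; exists z; left.
- move=> Z /qS_cases[Z1|->].
    by apply: le_trans (dist_self_le (S := _ `|` _) (or_introl Z1)) (dH_ge0 A B).
  by apply: dist_le; [exact: dH_ge0|exact: in_qS].
- move=> Z /qS_cases[Z1|->].
    by apply: le_trans (dist_self_le (S := _ `|` _) (or_introl Z1)) (dH_ge0 A B).
  by rewrite dHC; apply: dist_le; [exact: dH_ge0|exact: in_qS].
Qed.

Lemma rho_lb (chi psi : SFn X n) B : sval chi = [set B] ->
  dist_to (@dH R X n) B (F1set X n `|` sval psi) <= rho chi psi.
Proof.
move=> E; rewrite /rho; apply: haus_ge1; last by right; rewrite E.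
exists (Num.max 0 (dist_to (@dH R X n) B (F1set X n `|` sval psi))).
move=> _ [Z [Z1|ZB] <-].
  by apply: le_trans (dist_self_le (S := _ `|` _) (or_introl Z1)) _; rewrite le_max lexx.
by move: ZB; rewrite E => ->; rewrite le_max lexx orbT.
Qed.

Lemma ns_two (B : Fn X n) : ~ F1_pred (sval B) ->
  exists b1 b2, sval B b1 /\ sval B b2 /\ b1 <> b2.
Proof.
move=> nB; have [b1 Bb1] := Fn_ne B; apply: contrapT => hn; apply: nB.
exists b1; apply/seteqP; split => [b Bb|_ ->] //=.
by apply: contrapT => ne; apply: hn; exists b1, b; split => //; split => // /esym.
Qed.

Lemma ns_open : D_open (@dH R X n) [set A : Fn X n | ~ F1_pred (sval A)].
Proof.
move=> B nB; have [b1 [b2 [Bb1 [Bb2 ne]]]] := ns_two nB.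
have dpos : 0 < d b1 b2 by rewrite mdist_gt0; apply/eqP.
exists (d b1 b2 / 2); split; first by lra.
move=> C BC [x Cx]; have := dH_sing Bb1 Bb2 Cx; lra.
Qed.

Lemma nonisol : connected [set: X] -> (exists x y : X, x <> y) ->
  forall x e, 0 < e -> exists y, y <> x /\ d x y < e.
Proof.
move=> conn [y1 [y2 ny]] x e e0; apply: contrapT => hn.
have iso y : d x y < e -> y = x.
  by move=> lt; apply: contrapT => ne; apply: hn; exists y.
have op : open [set x].
  rewrite openE => z /= ->; rewrite /interior -metricType_numDomainType.filter_from_mdist_nbhs.
  by exists e => // y /iso.
have cl : closed [set x].
  rewrite -(setCK [set x]); apply: open_closedC.
  rewrite openE => z /= zx; rewrite /interior -metricType_numDomainType.filter_from_mdist_nbhs.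
  exists (d z x); first by rewrite /= mdist_gt0; apply/eqP.
  by move=> w /= lt wx; move: lt; rewrite wx ltxx.
have E := conn [set x] (ex_intro _ x erefl)
  (ex_intro2 _ _ [set x] op (esym (setTI _))) (ex_intro2 _ _ [set x] cl (esym (setTI _))).
have h1 : [set x] y1 by rewrite E.
have h2 : [set x] y2 by rewrite E.
by apply: ny; rewrite h1 h2.
Qed.

Lemma two_pts (f : X -> X) (x0 : X) (n0 : (0 < n)%N) :
  multi_sensitive (@rho R X n) (SF_map f n) -> exists x y : X, x <> y.
Proof.
move=> [delta [dpos H]].
have [] := H 1%N (fun _ => setT).
  by move=> i; split; [move=> z _; exists 1; split|exists (FX X n)].
move=> k [_ hk]; have [c [p' [_ [_ lt]]]] := hk ord0.
have [A EA] := q_surj x0 n0 c; have [B EB] := q_surj x0 n0 p'.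
move: lt; rewrite EA EB !SF_iter => lt.
have {}lt := lt_le_trans lt (rho_le_dH x0 n0 _ _).
apply: contrapT => hn.
have eq (x y : X) : x = y by apply: contrapT => ne; apply: hn; exists x, y.
suff : dH (iter k (Fn_map f n) A) (iter k (Fn_map f n) B) <= 0 by lra.
apply: dH_le => [a _|b _].
  by have [b Bb] := Fn_ne (iter k (Fn_map f n) B); exists b => //; rewrite (eq a b) mdistxx.
by have [a Aa] := Fn_ne (iter k (Fn_map f n) A); exists a => //; rewrite (eq a b) mdistxx.
Qed.
End X5.


Section X6.
Variables (R : realType) (X : metricType R) (n : nat).
Local Notation d := (@mdist R X).

Lemma ms32 (f : X -> X) (x0 : X) (n2 : (1 < n)%N) : connected [set: X] ->
  multi_sensitive (@rho R X n) (SF_map f n) -> multi_sensitive (@dH R X n) (Fn_map f n).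
Proof.
have n0 : (0 < n)%N by exact: ltnW.
move=> conn HS; have two := two_pts x0 n0 HS.
have [delta [dpos H]] := HS; exists delta; split => // m U hU.
pose NS := [set A : Fn X n | ~ F1_pred (sval A)].
pose W i : set (SFn X n) := [set chi | exists2 B, (U i `&` NS) B & chi = q B].
have [] := H m W.
  move=> i; split.
    move=> _ [B [UB nB] ->].
    have [e [e0 he]] := inter_open (hU i).1 (@ns_open R X n) (conj UB nB).
    have [b1 [b2 [Bb1 [Bb2 ne]]]] := ns_two nB.
    have dpos' : 0 < d b1 b2 by rewrite mdist_gt0; apply/eqP.
    exists (Num.min e (d b1 b2 / 2)); split.
      by rewrite lt_min e0 /=; lra.
    move=> psi lt; have [C EC] := q_surj x0 n0 psi; rewrite EC in lt *; exists C => //; apply: he.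
    have lb := @rho_lb R X n (q B) (q C) B (qsetE2 nB).
    have [Z ZS lZ] := dist_lt (ex_intro _ C (in_qS C)) (le_lt_trans lb lt).
    have nZ : ~ F1_pred (sval Z).
      move=> [x Zx]; have := dH_sing Bb1 Bb2 Zx; move: lZ; rewrite lt_min => /andP[_].
      lra.
    case/qS_cases: ZS => [//|ZC]; subst Z.
    by move: lZ; rewrite lt_min => /andP[].
  have [A UA] := (hU i).2; have [e [e0 he]] := (hU i).1 A UA.
  case: (pselect (F1_pred (sval A))) => [[x Ax]|nA]; last by exists (q A); exists A.
  have [y [yx dxy]] := nonisol conn two x e0.
  pose j0 : 'I_n := Ordinal n0; pose j1 : 'I_n := Ordinal n2.
  pose w j := if j == j0 then x else y.
  have wj0 : w j0 = x by rewrite /w eqxx.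
  have wj1 : w j1 = y by rewrite /w; case: eqP.
  pose C := rng w n0.
  have nC : ~ F1_pred (sval C).
    move=> [z Cz]; have : sval C x by exists j0.
    have : sval C y by exists j1.
    by rewrite Cz => yz xz; apply: yx; rewrite yz xz.
  exists (q C); exists C => //; split => //; apply: he.
  apply: (@le_lt_trans _ _ (d x y)) => //.
  apply: dH_le => [a|b].
    by rewrite Ax => ->; exists x; [exists j0|rewrite mdistxx mdist_ge0].
  move=> [j _ <-]; exists x; first by rewrite Ax.
  rewrite /w; case: eqP => _; first by rewrite mdistxx mdist_ge0.
  by rewrite metric_sym.
move=> k [k0 hk]; exists k; split => // i.
have [chi [psi [[B [UB _] ->] [[C [UC _] ->] lt]]]] := hk i.
exists B, C; split => //; split => //.
by move: lt; rewrite !SF_iter => lt; exact: lt_le_trans lt (rho_le_dH x0 n0 _ _).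
Qed.
End X6.

Unset Implicit Arguments. Set Strict Implicit.

Theorem theorem3 (R : realType) (X : metricType R) (n : nat) (f : X -> X) :
  [set: X] !=set0 -> compact [set: X] -> connected [set: X] ->
  (2 <= n)%N -> continuous f ->
  (multi_sensitive (@mdist R X) f <-> multi_sensitive (@dH R X n) (Fn_map f n)) /\
  (multi_sensitive (@rho R X n) (SF_map f n) -> multi_sensitive (@dH R X n) (Fn_map f n)).
Proof.
move=> [x0 _] _ conn n2 _.
have n0 : (0 < n)%N by exact: (leq_trans _ n2).
split; first by split; [exact: ms12|exact: ms21].
exact: ms32.
Qed.
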